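(* Let $\theta>0$, and for $n\in\mathbb{N}$ let $J_n\subset\{1,\dots,n\}$ be arbitrary. Define for $l\ge1$ \[ \upsilon_n(l):=\theta^l\sum_{\substack{j_1,\dots,j_l\in J_n\\ j_1+\cdots+j_l<n}}\frac{1}{j_1\cdots j_l}\Big(1-\frac{j_1+\cdots+j_l}{n}\Big)^{\theta-1}. \] If $\theta\ge1$, then $\upsilon_n(l)\le\upsilon_n(1)^l$ for all $n,l\in\mathbb{N}$. If $\theta<1$, then there is a constant $C>0$ depending only on $\theta$ such that $\upsilon_n(l)\le C^l(\upsilon_n(1)+1)^l$ for all $n,l\in\mathbb{N}$. *)

(* Defs.v *)
From Stdlib Require Import Reals List.
Import ListNotations.
Open Scope R_scope.

Fixpoint tuples (s : list nat) (l : nat) : list (list nat) :=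
  match l with
  | O => [nil]
  | S k => flat_map (fun j => map (fun t => j :: t) (tuples s k)) s
  end.

Definition sumn (t : list nat) : nat := fold_right Nat.add 0%nat t.

(* The elements of J_n, as a subset of {1,...,n} given by a boolean predicate
   J : nat -> nat -> bool (J n j means j ∈ J_n); only j in {1..n} are used. *)
Definition Jlist (J : nat -> nat -> bool) (n : nat) : list nat :=
  filter (J n) (seq 1 n).

Definition term (theta : R) (n : nat) (t : list nat) : R :=
  if Nat.ltb (sumn t) n then
    / INR (fold_right Nat.mul 1%nat t) *
    Rpower (1 - INR (sumn t) / INR n) (theta - 1)
  else 0.

Definition upsilon (theta : R) (J : nat -> nat -> bool) (n l : nat) : R :=
  theta ^ l * fold_right Rplus 0 (map (term theta n) (tuples (Jlist J n) l)).

(* Main.v *)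
Require Import Defs.
From Stdlib Require Import Reals Lra Lia List.
Import ListNotations.
Open Scope R_scope.

Notation SR f l := (fold_right Rplus 0 (map f l)).

Lemma sR_le {A} (f g : A -> R) l :
  (forall x, In x l -> f x <= g x) -> SR f l <= SR g l.
Proof.
  induction l as [|a l IH]; simpl; intros H; [lra|].
  apply Rplus_le_compat; [apply H; auto | apply IH; auto].
Qed.

Lemma sR_plus {A} (f g : A -> R) l : SR (fun x => f x + g x) l = SR f l + SR g l.
Proof. induction l as [|a l IH]; simpl; [lra| rewrite IH; ring]. Qed.

Lemma sR_scale {A} c (f : A -> R) l : SR (fun x => c * f x) l = c * SR f l.
Proof. induction l as [|a l IH]; simpl; [ring| rewrite IH; ring]. Qed.

Lemma sR_ext {A} (f g : A -> R) l : (forall x, In x l -> f x = g x) -> SR f l = SR g l.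
Proof.
  induction l as [|a l IH]; simpl; intros H; [lra|].
  rewrite H, IH; auto.
Qed.

Lemma sR_filter_le {A} (p : A -> bool) (f : A -> R) l :
  (forall x, In x l -> 0 <= f x) -> SR f (filter p l) <= SR f l.
Proof.
  induction l as [|a l IH]; simpl; intros H; [lra|].
  assert (0 <= f a) by auto.
  assert (SR f (filter p l) <= SR f l) by auto.
  destruct (p a); simpl; lra.
Qed.

Lemma sR_flat_map {A B} (g : A -> list B) (f : B -> R) l :
  SR f (flat_map g l) = SR (fun x => SR f (g x)) l.
Proof.
  induction l as [|a l IH]; simpl; [reflexivity|].
  rewrite map_app, fold_right_app. rewrite <- IH.
  generalize (SR f (flat_map g l)). intros r.
  induction (g a); simpl; [ring| rewrite IHl0; ring].
Qed.

Lemma telescope (V : nat -> R) N a :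
  SR (fun j => V j - V (S j)) (seq a N) = V a - V (a + N)%nat.
Proof.
  revert a; induction N as [|N IH]; intros a; simpl.
  - rewrite Nat.add_0_r; ring.
  - rewrite IH. replace (S a + N)%nat with (a + S N)%nat by lia. ring.
Qed.

Definition G (theta : R) (n r : nat) : R :=
  if Nat.ltb r n then Rpower (1 - INR r / INR n) (theta - 1) else 0.

Definition tterm (theta : R) (n r : nat) (t : list nat) : R :=
  if Nat.ltb (r + sumn t) n then
    / INR (fold_right Nat.mul 1%nat t) *
    Rpower (1 - INR (r + sumn t) / INR n) (theta - 1)
  else 0.

Definition F theta n s l r := theta ^ l * SR (tterm theta n r) (tuples s l).

Lemma F0 theta n s r : F theta n s 0 r = G theta n r.
Proof.
  unfold F, G, tterm; simpl. rewrite Nat.add_0_r.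
  destruct (Nat.ltb r n); [rewrite Rinv_1|]; ring.
Qed.

Lemma tterm_cons theta n r j t :
  tterm theta n r (j :: t) = / INR j * tterm theta n (r + j) t.
Proof.
  unfold tterm. unfold sumn; simpl fold_right. fold (sumn t).
  rewrite Nat.add_assoc.
  destruct (Nat.ltb (r + j + sumn t) n); [rewrite mult_INR, Rinv_mult|]; ring.
Qed.

Lemma Frec theta n s l r :
  F theta n s (S l) r = SR (fun j => theta * / INR j * F theta n s l (r + j)) s.
Proof.
  unfold F. simpl tuples. rewrite sR_flat_map.
  rewrite (sR_ext _ (fun j => / INR j * SR (tterm theta n (r + j)) (tuples s l))).
  2:{ intros j _. rewrite map_map.
      rewrite <- sR_scale. apply sR_ext. intros; apply tterm_cons. }
  rewrite <- sR_scale. apply sR_ext. intros; simpl; ring.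
Qed.

Lemma Fbound theta n s D (Ht : 0 < theta) (HD : 0 <= D)
  (Hs : forall j, In j s -> (1 <= j)%nat)
  (H : forall r, SR (fun j => theta * / INR j * G theta n (r + j)) s <= D * G theta n r) :
  forall l r, F theta n s l r <= D ^ l * G theta n r.
Proof.
  induction l as [|l IH]; intros r.
  - rewrite F0; simpl; lra.
  - rewrite Frec.
    eapply Rle_trans.
    { apply sR_le with (g := fun j => D ^ l * (theta * / INR j * G theta n (r + j))).
      intros j Hj.
      replace (D ^ l * (theta * / INR j * G theta n (r + j))) with (theta * / INR j * (D ^ l * G theta n (r + j))) by ring.
      apply Rmult_le_compat_l; [|apply IH].
      assert (0 < INR j) by (apply lt_0_INR; specialize (Hs j Hj); lia).
      apply Rmult_le_pos; [lra| left; apply Rinv_0_lt_compat; lra]. }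
    rewrite sR_scale. simpl.
    replace (D * D ^ l * G theta n r) with (D ^ l * (D * G theta n r)) by ring.
    apply Rmult_le_compat_l; [apply pow_le; lra|].
    apply H.
Qed.

Lemma ups_F theta J n l : upsilon theta J n l = F theta n (Jlist J n) l 0.
Proof. reflexivity. Qed.

Lemma ups1 theta J n : upsilon theta J n 1 =
  SR (fun j => theta * / INR j * G theta n j) (Jlist J n).
Proof.
  rewrite ups_F, Frec. apply sR_ext; intros; rewrite F0; reflexivity.
Qed.

Lemma Jlist_in J n j : In j (Jlist J n) -> (1 <= j <= n)%nat.
Proof. unfold Jlist; rewrite filter_In, in_seq; lia. Qed.

Lemma G0 theta n : (1 <= n)%nat -> G theta n 0 = 1.
Proof.
  intros Hn. unfold G. replace (Nat.ltb 0 n) with true by (symmetry; apply Nat.ltb_lt; lia).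
  simpl. replace (1 - 0 / INR n) with 1 by (unfold Rdiv; ring).
  unfold Rpower. rewrite ln_1, Rmult_0_r, exp_0. reflexivity.
Qed.

Lemma Gnn theta n r : 0 <= G theta n r.
Proof. unfold G; destruct (Nat.ltb r n); [left; apply exp_pos| lra]. Qed.

Lemma base_pos a n : (a < n)%nat -> 0 < 1 - INR a / INR n.
Proof.
  intros H. apply lt_INR in H. assert (0 <= INR a) by apply pos_INR.
  assert (0 < INR n) by lra.
  assert (INR a / INR n < 1); [|lra].
  apply (Rmult_lt_reg_r (INR n)); auto. unfold Rdiv; rewrite Rmult_assoc, Rinv_l; lra.
Qed.

Lemma base_le1 a n : (0 < n)%nat -> 1 - INR a / INR n <= 1.
Proof.
  intros H. apply lt_0_INR in H. assert (0 <= INR a) by apply pos_INR.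
  assert (0 <= INR a / INR n); [|lra].
  unfold Rdiv; apply Rmult_le_pos; auto. left; apply Rinv_0_lt_compat; auto.
Qed.

Lemma Gmul theta n r j : 1 <= theta -> G theta n (r + j) <= G theta n j * G theta n r.
Proof.
  intros Ht. unfold G at 1. destruct (Nat.ltb (r + j) n) eqn:E.
  2:{ apply Rmult_le_pos; apply Gnn. }
  apply Nat.ltb_lt in E. unfold G.
  replace (Nat.ltb j n) with true by (symmetry; apply Nat.ltb_lt; lia).
  replace (Nat.ltb r n) with true by (symmetry; apply Nat.ltb_lt; lia).
  rewrite Rpower_mult_distr by (apply base_pos; lia).
  apply Rle_Rpower_l; [lra|]. split; [apply base_pos; lia|].
  rewrite plus_INR. unfold Rdiv.
  assert (0 <= INR r * INR j * (/ INR n * / INR n)).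
  { apply Rmult_le_pos; [apply Rmult_le_pos; apply pos_INR|].
    apply Rmult_le_pos; left; apply Rinv_0_lt_compat, lt_0_INR; lia. }
  nra.
Qed.

Lemma case1 theta J n l : 1 <= theta -> (1 <= n)%nat ->
  upsilon theta J n l <= upsilon theta J n 1 ^ l.
Proof.
  intros Ht Hn. rewrite ups_F.
  set (D := upsilon theta J n 1).
  replace (D ^ l) with (D ^ l * G theta n 0) by (rewrite G0 by auto; ring).
  apply Fbound; try lra.
  - unfold D; rewrite ups1. apply Rle_trans with (SR (fun _ => 0) (Jlist J n)).
    + clear; induction (Jlist J n); simpl; lra.
    + apply sR_le. intros j Hj. apply Jlist_in in Hj.
      apply Rmult_le_pos; [|apply Gnn]. apply Rmult_le_pos; [lra|].
      left; apply Rinv_0_lt_compat, lt_0_INR; lia.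
  - intros j Hj; apply Jlist_in in Hj; lia.
  - intros r. unfold D; rewrite ups1, Rmult_comm, <- sR_scale.
    apply sR_le. intros j Hj. apply Jlist_in in Hj.
    replace (G theta n r * (theta * / INR j * G theta n j)) with (theta * / INR j * (G theta n j * G theta n r)) by ring.
    apply Rmult_le_compat_l; [|apply Gmul; lra].
    apply Rmult_le_pos; [lra|].
    left; apply Rinv_0_lt_compat, lt_0_INR; lia.
Qed.

Lemma exp_le' a b : a <= b -> exp a <= exp b.
Proof. intros [H|H]; [left; apply exp_increasing; auto| subst; lra]. Qed.

Lemma ln_le' x y : 0 < x -> x <= y -> ln x <= ln y.
Proof. intros Hx [H|H]; [left; apply ln_increasing; auto| subst; lra]. Qed.

Lemma Rpow_dec e x y : e <= 0 -> 0 < x -> x <= y -> Rpower y e <= Rpower x e.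
Proof.
  intros He Hx Hxy. unfold Rpower. apply exp_le'.
  pose proof (ln_le' x y Hx Hxy). nra.
Qed.

Lemma Rpow_ge1 e x : e <= 0 -> 0 < x -> x <= 1 -> 1 <= Rpower x e.
Proof.
  intros. replace 1 with (Rpower 1 e) at 1.
  - apply Rpow_dec; auto.
  - unfold Rpower; rewrite ln_1, Rmult_0_r, exp_0; reflexivity.
Qed.

Lemma Rpow_half e : -1 <= e <= 0 -> Rpower (/2) e <= 2.
Proof.
  intros He. unfold Rpower. rewrite ln_Rinv by lra.
  rewrite <- (exp_ln 2) at 2 by lra. apply exp_le'.
  assert (0 < ln 2) by (pose proof ln_lt_2; lra). nra.
Qed.

Lemma Rpow_le1 e x : 0 <= e -> 0 < x -> x <= 1 -> Rpower x e <= 1.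
Proof.
  intros. replace 1 with (Rpower 1 e) at 1.
  - apply Rle_Rpower_l; auto.
  - unfold Rpower; rewrite ln_1, Rmult_0_r, exp_0; reflexivity.
Qed.

Definition V theta (m j : nat) : R :=
  if Nat.ltb j m then Rpower (INR (m - j) / INR m) theta else 0.

Lemma KV theta m j : 0 < theta < 1 -> (j < m)%nat ->
  Rpower (INR (m - j) / INR m) (theta - 1) <= INR m / theta * (V theta m j - V theta m (S j)).
Proof.
  intros Ht Hj. unfold V.
  replace (Nat.ltb j m) with true by (symmetry; apply Nat.ltb_lt; lia).
  assert (HM : 0 < INR m) by (apply lt_0_INR; lia).
  destruct (Nat.ltb (S j) m) eqn:E.
  - apply Nat.ltb_lt in E.
    set (x := INR (m - j) / INR m). set (x' := INR (m - S j) / INR m).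
    assert (Hx' : 0 < x').
    { unfold x'. unfold Rdiv. apply Rmult_lt_0_compat; [apply lt_0_INR; lia| apply Rinv_0_lt_compat; auto]. }
    assert (Hxx : x' + / INR m = x).
    { unfold x, x'. replace (m - j)%nat with (S (m - S j)) by lia. rewrite S_INR. field. lra. }
    destruct (MVT_cor2 (fun y => Rpower y theta) (fun y => theta * Rpower y (theta - 1)) x' x)
      as [c [Hc1 Hc2]].
    + assert (0 < / INR m) by (apply Rinv_0_lt_compat; auto). lra.
    + intros c Hc. apply derivable_pt_lim_power. lra.
    + rewrite Hc1. replace (x - x') with (/ INR m) by lra.
      replace (INR m / theta * (theta * Rpower c (theta - 1) * / INR m)) with (Rpower c (theta - 1)) by (field; lra).
      apply Rpow_dec; lra.
  - apply Nat.ltb_ge in E. replace (m - j)%nat with 1%nat by lia.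
    set (x := INR 1 / INR m).
    replace theta with ((theta - 1) + 1) at 3 by ring.
    rewrite Rpower_plus, Rpower_1.
    2:{ unfold x; simpl; unfold Rdiv; rewrite Rmult_1_l; apply Rinv_0_lt_compat; auto. }
    assert (0 < Rpower x (theta - 1)) by apply exp_pos.
    unfold x at 3. simpl INR.
    replace (INR m / theta * (Rpower x (theta - 1) * (1 / INR m) - 0)) with (Rpower x (theta - 1) / theta) by (field; lra).
    unfold Rdiv. rewrite <- (Rmult_1_r (Rpower x (theta-1))) at 1.
    apply Rmult_le_compat_l; [lra|].
    rewrite <- Rinv_1. apply Rinv_le_contravar; lra.
Qed.

Lemma V_nn theta m j : 0 < theta < 1 -> 0 <= V theta m j - V theta m (S j).
Proof.
  intros Ht. destruct (Nat.lt_ge_cases j m).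
  - pose proof (KV theta m j Ht H).
    assert (0 < Rpower (INR (m - j) / INR m) (theta - 1)) by apply exp_pos.
    assert (HM : 0 < INR m) by (apply lt_0_INR; lia).
    assert (0 < INR m / theta) by (unfold Rdiv; apply Rmult_lt_0_compat; [lra| apply Rinv_0_lt_compat; lra]).
    destruct (Rle_or_lt 0 (V theta m j - V theta m (S j))); auto. nra.
  - unfold V. replace (Nat.ltb j m) with false by (symmetry; apply Nat.ltb_ge; lia).
    replace (Nat.ltb (S j) m) with false by (symmetry; apply Nat.ltb_ge; lia). lra.
Qed.

Lemma V_le1 theta m j : 0 < theta < 1 -> 0 <= V theta m j <= 1.
Proof.
  intros Ht. unfold V. destruct (Nat.ltb j m) eqn:E; [|lra].
  apply Nat.ltb_lt in E. split; [left; apply exp_pos|].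
  apply Rpow_le1; [lra| |].
  - unfold Rdiv; apply Rmult_lt_0_compat; [apply lt_0_INR; lia| apply Rinv_0_lt_compat, lt_0_INR; lia].
  - assert (0 < INR m) by (apply lt_0_INR; lia).
    apply (Rmult_le_reg_r (INR m)); auto. unfold Rdiv; rewrite Rmult_assoc, Rinv_l by lra.
    rewrite Rmult_1_l, Rmult_1_r. apply le_INR; lia.
Qed.

Lemma perj theta n r j : 0 < theta < 1 -> (1 <= j)%nat -> (r < n)%nat ->
  theta * / INR j * G theta n (r + j) <=
  (2 * (theta * / INR j * G theta n j) + 2 * (V theta (n - r) j - V theta (n - r) (S j)))
   * G theta n r.
Proof.
  intros Ht Hj Hr.
  assert (HJ : 0 < INR j) by (apply lt_0_INR; lia).
  assert (Hc : 0 < theta * / INR j) by (apply Rmult_lt_0_compat; [lra| apply Rinv_0_lt_compat; auto]).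
  pose proof (V_nn theta (n - r) j Ht) as HV.
  pose proof (Gnn theta n j). pose proof (Gnn theta n r).
  unfold G at 1. destruct (Nat.ltb (r + j) n) eqn:E.
  2:{ rewrite Rmult_0_r. apply Rmult_le_pos; auto. nra. }
  apply Nat.ltb_lt in E.
  set (m := (n - r)%nat) in *.
  assert (HM : 0 < INR m) by (apply lt_0_INR; unfold m; lia).
  assert (HN : 0 < INR n) by (apply lt_0_INR; lia).
  assert (Hmr : INR m = INR n - INR r) by (unfold m; rewrite minus_INR by lia; ring).
  assert (Hmj : INR (m - j) = INR n - INR r - INR j) by (rewrite minus_INR by (unfold m; lia); lra).
  assert (Ha : 0 < INR (m - j) / INR m).
  { unfold Rdiv; apply Rmult_lt_0_compat; [apply lt_0_INR; unfold m; lia| apply Rinv_0_lt_compat; auto]. }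
  replace (1 - INR (r + j) / INR n) with ((INR (m - j) / INR m) * (1 - INR r / INR n)).
  2:{ rewrite Hmj, Hmr, plus_INR. field. split; lra. }
  rewrite <- Rpower_mult_distr by (auto; apply base_pos; auto).
  assert (HGr : G theta n r = Rpower (1 - INR r / INR n) (theta - 1)).
  { unfold G. replace (Nat.ltb r n) with true by (symmetry; apply Nat.ltb_lt; auto). reflexivity. }
  rewrite <- HGr.
  set (Pa := Rpower (INR (m - j) / INR m) (theta - 1)).
  rewrite <- Rmult_assoc. apply Rmult_le_compat_r; auto.
  destruct (Compare_dec.le_lt_dec (2 * j) m) as [H2|H2].
  - assert (Pa <= 2).
    { apply Rle_trans with (Rpower (/2) (theta - 1)); [|apply Rpow_half; lra].
      apply Rpow_dec; try lra.
      apply le_INR in H2. rewrite mult_INR in H2. simpl INR in H2.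
      rewrite Hmj. rewrite Hmr in *. apply (Rmult_le_reg_r (INR n - INR r)); [lra|].
      unfold Rdiv. rewrite Rmult_assoc, Rinv_l by lra. lra. }
    assert (1 <= G theta n j).
    { unfold G. replace (Nat.ltb j n) with true by (symmetry; apply Nat.ltb_lt; lia).
      apply Rpow_ge1; [lra| apply base_pos; lia| apply base_le1; lia]. }
    nra.
  - assert (Hinv : / INR j <= 2 / INR m).
    { apply lt_INR in H2. rewrite mult_INR in H2. simpl INR in H2.
      apply (Rmult_le_reg_r (INR j * INR m)); [nra|].
      unfold Rdiv. field_simplify; try lra. }
    pose proof (KV theta m j Ht ltac:(unfold m; lia)) as K. fold Pa in K.
    assert (0 < Pa) by apply exp_pos.
    assert (theta * / INR j * Pa <= 2 * (V theta m j - V theta m (S j))).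
    { apply Rle_trans with (theta * (2 / INR m) * Pa).
      - apply Rmult_le_compat_r; [lra|]. apply Rmult_le_compat_l; lra.
      - replace (2 * (V theta m j - V theta m (S j))) with
          (theta * (2 / INR m) * (INR m / theta * (V theta m j - V theta m (S j)))) by (field; lra).
        apply Rmult_le_compat_l; [|auto].
        apply Rmult_le_pos; [lra|]. unfold Rdiv; apply Rmult_le_pos; [lra| left; apply Rinv_0_lt_compat; auto]. }
    nra.
Qed.

Lemma sR0 {X} (l : list X) : SR (fun _ => 0) l = 0.
Proof. induction l; simpl; lra. Qed.

Lemma case2 theta J n l : 0 < theta < 1 -> (1 <= n)%nat ->
  upsilon theta J n l <= 2 ^ l * (upsilon theta J n 1 + 1) ^ l.
Proof.
  intros Ht Hn. rewrite <- Rpow_mult_distr, ups_F.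
  set (D := 2 * (upsilon theta J n 1 + 1)).
  assert (Hu : 0 <= upsilon theta J n 1).
  { rewrite ups1. apply Rle_trans with (SR (fun _ : nat => 0) (Jlist J n)); [rewrite sR0; lra|].
    apply sR_le. intros j Hj. apply Jlist_in in Hj.
    apply Rmult_le_pos; [|apply Gnn]. apply Rmult_le_pos; [lra|].
    left; apply Rinv_0_lt_compat, lt_0_INR; lia. }
  replace (D ^ l) with (D ^ l * G theta n 0) by (rewrite G0 by auto; ring).
  apply Fbound; try lra.
  - unfold D; lra.
  - intros j Hj; apply Jlist_in in Hj; lia.
  - intros r. destruct (Nat.lt_ge_cases r n) as [Hr|Hr].
    + eapply Rle_trans.
      { apply sR_le. intros j Hj. apply Jlist_in in Hj. apply perj; auto; lia. }
      rewrite (sR_ext _ (fun j => G theta n r * (2 * (theta * / INR j * G theta n j) +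
          2 * (V theta (n - r) j - V theta (n - r) (S j))))) by (intros; ring).
      rewrite sR_scale, sR_plus, !sR_scale, <- ups1.
      rewrite Rmult_comm. apply Rmult_le_compat_r; [apply Gnn|].
      unfold D.
      assert (SR (fun j => V theta (n - r) j - V theta (n - r) (S j)) (Jlist J n) <= 1); [|lra].
      unfold Jlist. eapply Rle_trans; [apply sR_filter_le|].
      { intros; apply V_nn; auto. }
      rewrite telescope.
      pose proof (V_le1 theta (n - r) 1 Ht). pose proof (V_le1 theta (n - r) (1 + n) Ht). lra.
    + unfold G at 2. replace (Nat.ltb r n) with false by (symmetry; apply Nat.ltb_ge; auto).
      rewrite Rmult_0_r. apply Rle_trans with (SR (fun _ : nat => 0) (Jlist J n)); [|rewrite sR0; lra].
      right. apply sR_ext.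
      intros j _. unfold G. replace (Nat.ltb (r + j) n) with false by (symmetry; apply Nat.ltb_ge; lia).
      ring.
Qed.

Theorem lemma4 (theta : R) (Htheta : 0 < theta) :
  (1 <= theta ->
     forall (J : nat -> nat -> bool) (n l : nat), (1 <= n)%nat -> (1 <= l)%nat ->
       upsilon theta J n l <= (upsilon theta J n 1) ^ l) /\
  (theta < 1 ->
     exists C : R, 0 < C /\
       forall (J : nat -> nat -> bool) (n l : nat), (1 <= n)%nat -> (1 <= l)%nat ->
         upsilon theta J n l <= C ^ l * (upsilon theta J n 1 + 1) ^ l).
Proof.
  split.
  - intros Ht J n l Hn _. apply case1; auto.
  - intros Ht. exists 2. split; [lra|]. intros J n l Hn _. apply case2; auto.
Qed.
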